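(* Let $X$ be an ultrahomogeneous linear order, let $\Gamma$ be the group of all automorphisms of $X$ acting by application, and let $I$ be the ideal of nowhere dense subsets of $X$ (in the order topology). Then $\Gamma\curvearrowright X, I$ is a simple dynamical ideal.
   Context: A linear order is ultrahomogeneous if every order-isomorphism between finite subsets extends to an automorphism. For a group $\Gamma$ acting on $X$ and $a\subseteq X$, $\mathrm{pstab}(a)=\{\gamma\in\Gamma:\gamma\cdot x=x\ \forall x\in a\}$. A dynamical ideal $\Gamma\curvearrowright X, I$ (a $\Gamma$-invariant ideal containing all singletons) is simple if for all $a\subseteq b$ in $I$, the only normal subgroup of $\mathrm{pstab}(a)$ containing $\mathrm{pstab}(b)$ is $\mathrm{pstab}(a)$ itself. *)

(* Defs.v *)
From HB Require Import structures.
From mathcomp Require Import all_boot all_order.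
From mathcomp Require Import all_classical topology_structure order_topology.

Set Implicit Arguments.
Unset Strict Implicit.
Unset Printing Implicit Defensive.

Import Order.TTheory.
Local Open Scope classical_set_scope.
Local Open Scope order_scope.

Section Defs.
Context {disp : Order.disp_t} {X : orderType disp}.

Definition is_aut (g : X -> X) : Prop :=
  bijective g /\ {mono g : x y / x <= y}.

Definition Aut : set (X -> X) := [set g | is_aut g].

(** ultrahomogeneity: every order isomorphism between finite subsets
    (given as a strictly increasing map f on a finite set A, onto f @` A)
    extends to an automorphism *)
Definition ultrahomogeneous : Prop :=
  forall (A : set X) (f : X -> X), finite_set A ->
    (forall x y, A x -> A y -> x < y -> f x < f y) ->
    exists g, is_aut g /\ (forall x, A x -> g x = f x).

Definition nowhere_dense (A : set (order_topology X)) : Prop :=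
  interior (closure A) = set0.

Definition nowhere_dense_ideal : set (set X) :=
  [set A : set X | nowhere_dense (A : set (order_topology X))].

End Defs.

Section Dyn.
Context {X : Type}.

Definition pstab (Gam : set (X -> X)) (a : set X) : set (X -> X) :=
  [set g | Gam g /\ (forall x, a x -> g x = x)].

Definition normal_subgroup (N H : set (X -> X)) : Prop :=
  [/\ N `<=` H,
      N id,
      (forall g h, N g -> N h -> N (g \o h)),
      (forall g h, N g -> cancel g h -> cancel h g -> N h) &
      (forall g h n, H g -> cancel g h -> cancel h g -> N n ->
                     N (h \o n \o g))].

Definition is_ideal (I : set (set X)) : Prop :=
  [/\ I set0,
      (forall a b, I b -> a `<=` b -> I a) &
      (forall a b, I a -> I b -> I (a `|` b))].

Definition dynamical_ideal (Gam : set (X -> X)) (I : set (set X)) : Prop :=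
  [/\ is_ideal I,
      (forall g a, Gam g -> I a -> I (g @` a)) &
      (forall x, I [set x])].

Definition simple_dynamical_ideal (Gam : set (X -> X)) (I : set (set X)) : Prop :=
  dynamical_ideal Gam I /\
  forall a b, I a -> I b -> a `<=` b ->
    forall N, normal_subgroup N (pstab Gam a) -> pstab Gam b `<=` N ->
      N = pstab Gam a.

End Dyn.

(* Main.v *)
Require Import Defs.
From mathcomp Require Import all_boot all_order.
From mathcomp Require Import all_classical topology_structure order_topology.
From mathcomp Require Import interval set_interval.
From Stdlib Require Import ZArith Lia.

Set Implicit Arguments.
Unset Strict Implicit.
Unset Printing Implicit Defensive.
Import Order.TTheory.
Local Open Scope classical_set_scope.
Local Open Scope order_scope.

Section Basics.
Context {disp : Order.disp_t} {X : orderType disp}.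
Implicit Types (f g : X -> X) (x y z u p q : X).

Lemma aut_lt f : is_aut f -> forall x y, (f x < f y) = (x < y).
Proof. by case=> _ m x y; rewrite !ltNge m. Qed.

Lemma aut_le f : is_aut f -> forall x y, (f x <= f y) = (x <= y).
Proof. by case=> _ m x y; rewrite m. Qed.

Lemma aut_inj f : is_aut f -> injective f.
Proof. by case=> [[h fh _]] _; exact: can_inj fh. Qed.

Lemma mk_aut f : (forall x y, x < y -> f x < f y) -> (forall y, exists x, f x = y) ->
  is_aut f.
Proof.
move=> hlt hs; have m : {mono f : x y / x <= y} by exact: le_mono.
have [fi hfi] := choice hs.
split=> //; exists fi => // x.
by apply/le_anti; rewrite -(m (fi (f x)) x) -(m x (fi (f x))) hfi lexx.
Qed.

Lemma aut_id : is_aut (@id X).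
Proof. by apply: mk_aut => // y; exists y. Qed.

Lemma aut_comp f g : is_aut f -> is_aut g -> is_aut (f \o g).
Proof.
move=> hf hg; apply: mk_aut => [x y xy|y] /=; first by rewrite !aut_lt.
case: hf => [[fi _ fK]] _; case: hg => [[gi _ gK]] _.
by exists (gi (fi y)); rewrite /= gK fK.
Qed.

Lemma aut_inv f fi : is_aut f -> cancel f fi -> cancel fi f -> is_aut fi.
Proof.
move=> hf c1 c2; apply: mk_aut => [x y xy|y]; last by exists (f y).
by rewrite -(aut_lt hf) !c2.
Qed.

Lemma aut_invE f : is_aut f -> exists fi, [/\ is_aut fi, cancel f fi & cancel fi f].
Proof.
move=> hf; have [[fi c1 c2] _] := hf; exists fi; split => //.
exact: aut_inv c1 c2.
Qed.

Lemma aut_piece f1 f2 u : is_aut f1 -> is_aut f2 -> f1 u = f2 u ->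
  is_aut (fun z => if z <= u then f1 z else f2 z).
Proof.
move=> h1 h2 e; apply: mk_aut => [x y xy|y].
  case: ifP => xu; case: ifP => yu.
  - by rewrite aut_lt.
  - rewrite -(aut_le h1) in xu; apply: (le_lt_trans xu); rewrite e aut_lt //.
    by rewrite ltNge yu.
  - by move: (le_trans (ltW xy) yu); rewrite xu.
  - by rewrite aut_lt.
case: (aut_invE h1) => [g1 [_ c1 c2]]; case: (aut_invE h2) => [g2 [_ d1 d2]].
case: (leP y (f1 u)) => yu.
  by exists (g1 y); rewrite -(aut_le h1) c2 yu.
exists (g2 y); have -> : (g2 y <= u) = false by rewrite -(aut_le h2) d2 -e leNgt yu.
by rewrite d2.
Qed.

Definition UH := @ultrahomogeneous disp X.

Lemma uh2 : UH -> forall p q (p' q' : X), p < q -> p' < q' ->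
  exists al, [/\ is_aut al, al p = p' & al q = q'].
Proof.
move=> uh p q p' q' pq pq'.
have hf : forall x y, [set p; q] x -> [set p; q] y -> x < y ->
    (fun z => if z == p then p' else q') x < (fun z => if z == p then p' else q') y.
  move=> x y [->|->] [->|->]; rewrite ?ltxx //= ?eqxx ?(gt_eqF pq) //.
  by move=> qp; move: (lt_trans qp pq); rewrite ltxx.
have [al [hal e]] := uh _ _ (finite_set2 p q) hf.
exists al; split => //; first by rewrite e /= ?eqxx //; left.
rewrite e /=; last by right.
by rewrite (gt_eqF pq).
Qed.

Lemma uh1 : UH -> forall p (p' : X), exists al, is_aut al /\ al p = p'.
Proof.
move=> uh p p'.
have hf : forall x y, [set p] x -> [set p] y -> x < y -> (fun _ : X => p') x < (fun _ : X => p') y.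
  by move=> x y -> ->; rewrite ltxx.
have [al [hal e]] := uh _ _ (finite_set1 p) hf.
by exists al; split => //; rewrite e.
Qed.

End Basics.

Section Glue.
Context {disp : Order.disp_t} {X : orderType disp}.
Context (I : Type) (P : set I) (lo hi : I -> X) (phi : I -> X -> X).
Hypothesis hdisj : forall i j z, P i -> P j -> lo i <= z <= hi i -> lo j <= z <= hi j -> i = j.
Hypothesis hphi : forall i, P i -> [/\ is_aut (phi i), phi i (lo i) = lo i & phi i (hi i) = hi i].

Definition glue (z : X) : X :=
  match pselect (exists i, P i /\ lo i <= z <= hi i) with
  | left H => phi (projT1 (cid H)) z
  | right _ => z
  end.

Lemma glue_in i z : P i -> lo i <= z <= hi i -> glue z = phi i z.
Proof.
move=> Pi zi; rewrite /glue; case: pselect => [H|]; last by case; exists i.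
case: (cid H) => j [Pj zj] /=.
by rewrite (hdisj Pj Pi zj zi).
Qed.

Lemma glue_out z : (forall i, P i -> ~ (lo i <= z <= hi i)) -> glue z = z.
Proof.
move=> h; rewrite /glue; case: pselect => // -[i [Pi zi]].
by case: (h i Pi zi).
Qed.

Lemma blk_map i z : P i -> (lo i <= phi i z <= hi i) = (lo i <= z <= hi i).
Proof.
move=> Pi; have [ha e1 e2] := hphi Pi.
by rewrite -{1}e1 -{1}e2 !(aut_le ha).
Qed.

Lemma glue_aut : is_aut glue.
Proof.
apply: mk_aut => [x y xy|y].
  have [[i [Pi xi]]|nx] := pselect (exists i, P i /\ lo i <= x <= hi i);
  have [[j [Pj yj]]|ny] := pselect (exists j, P j /\ lo j <= y <= hi j).
  - rewrite (glue_in Pi xi) (glue_in Pj yj).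
    have [yhi|hiy] := leP y (hi i).
      have yi : lo i <= y <= hi i.
        by rewrite yhi andbT; case/andP: xi => + _; move/le_trans; apply; exact: ltW.
      by rewrite (hdisj Pj Pi yj yi); case: (hphi Pi) => ha _ _; rewrite (aut_lt ha).
    have [ljhi|hilj] := leP (lo j) (hi i).
      have h1 : lo j <= hi i <= hi j.
        by rewrite ljhi /=; case/andP: yj => _; apply: le_trans; exact: ltW.
      have h2 : lo i <= hi i <= hi i by rewrite lexx andbT; case/andP: xi => a b; exact: le_trans b.
      have eij := hdisj Pi Pj h2 h1; subst j.
      by case/andP: yj => _ /(lt_le_trans hiy); rewrite ltxx.
    have : phi i x <= hi i by rewrite -(blk_map x Pi) in xi; case/andP: xi.
    move/le_lt_trans => /(_ _ hilj) /lt_le_trans; apply.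
    by rewrite -(blk_map y Pj) in yj; case/andP: yj.
  - rewrite (glue_in Pi xi) (glue_out (fun k Pk hk => ny (ex_intro _ k (conj Pk hk)))).
    have [yhi|hiy] := leP y (hi i).
      case: ny; exists i; split => //.
      by rewrite yhi andbT; case/andP: xi => + _; move/le_trans; apply; exact: ltW.
    by apply: le_lt_trans hiy; rewrite -(blk_map x Pi) in xi; case/andP: xi.
  - rewrite (glue_in Pj yj) (glue_out (fun k Pk hk => nx (ex_intro _ k (conj Pk hk)))).
    have [ljx|xlj] := leP (lo j) x.
      case: nx; exists j; split => //.
      by rewrite ljx /=; case/andP: yj => _; apply: le_trans; exact: ltW.
    by apply: lt_le_trans xlj _; rewrite -(blk_map y Pj) in yj; case/andP: yj.
  - by rewrite (glue_out (fun k Pk hk => nx (ex_intro _ k (conj Pk hk))))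
      (glue_out (fun k Pk hk => ny (ex_intro _ k (conj Pk hk)))).
have [[j [Pj yj]]|ny] := pselect (exists j, P j /\ lo j <= y <= hi j).
  have [ha _ _] := hphi Pj; have [psi [_ c1 c2]] := aut_invE ha.
  have zj : lo j <= psi y <= hi j by rewrite -(blk_map _ Pj) c2.
  by exists (psi y); rewrite (glue_in Pj zj) c2.
by exists y; rewrite (glue_out (fun k Pk hk => ny (ex_intro _ k (conj Pk hk)))).
Qed.

End Glue.

Section UHc.
Context {disp : Order.disp_t} {X : orderType disp}.
Context (uh : @ultrahomogeneous disp X) (two : exists x y : X, x <> y).
Implicit Types (f g : X -> X) (x y z u p q : X).

Lemma two_lt : exists x y : X, x < y.
Proof.
case: two => x [y nxy]; case: (ltgtP x y) => h; [by exists x, y|by exists y, x|by case: nxy].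
Qed.

Lemma nomax x : exists y, x < y.
Proof.
case: two_lt => a [b ab]; have [al [hal e]] := uh1 uh a x.
by exists (al b); rewrite -e (aut_lt hal).
Qed.

Lemma nomin x : exists y, y < x.
Proof.
case: two_lt => a [b ab]; have [al [hal e]] := uh1 uh b x.
by exists (al a); rewrite -e (aut_lt hal).
Qed.

Lemma dense_uh x y : x < y -> exists z, x < z < y.
Proof.
move=> xy; case: (nomax y) => w yw.
have [al [hal e1 e2]] := uh2 uh xy (lt_trans xy yw).
have [ai [hai c1 c2]] := aut_invE hal.
have ex : ai x = x by rewrite -{1}e1 c1.
have ew : ai w = y by rewrite -e2 c1.
have h1 : x < ai y by rewrite -{1}ex (aut_lt hai).
have h2 : ai y < y by rewrite -{2}ew (aut_lt hai).
by exists (ai y); rewrite h1 h2.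
Qed.

Lemma ext_aut g p s t q : is_aut g -> p < s -> s <= t -> t < q -> p < g s -> g t < q ->
  exists phi, [/\ is_aut phi, phi p = p, phi q = q &
                 forall z, s <= z <= t -> phi z = g z].
Proof.
move=> hg ps st tq pgs gtq.
have [al [hal a1 a2]] := uh2 uh ps pgs.
have [be [hbe b1 b2]] := uh2 uh tq gtq.
have sq : s < q by apply: le_lt_trans tq.
have pt : p < t by apply: lt_le_trans st.
pose f1 z := if z <= p then z else al z.
have h1 : is_aut f1 by apply: aut_piece aut_id hal _; rewrite a1.
have f1s : f1 s = g s by rewrite /f1 leNgt ps /= a2.
pose f2 z := if z <= s then f1 z else g z.
have h2 : is_aut f2 by apply: aut_piece h1 hg f1s.
have f2t : f2 t = be t.
  rewrite /f2 b1; case: ifP => // ts; have -> : t = s by apply/le_anti; rewrite ts st.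
  by [].
pose f3 z := if z <= t then f2 z else be z.
have h3 : is_aut f3 by apply: aut_piece h2 hbe f2t.
have f3q : f3 q = q by rewrite /f3 leNgt tq /= b2.
pose f4 z := if z <= q then f3 z else z.
have h4 : is_aut f4 by apply: aut_piece h3 aut_id f3q.
exists f4; split => //.
- rewrite /f4 /f3 /f2 /f1 (ltW (lt_trans ps sq)) (ltW pt) (ltW ps) lexx //.
- by rewrite /f4 lexx.
- move=> z /andP[sz zt]; rewrite /f4 /f3 /f2 (ltW (le_lt_trans zt tq)) zt.
  case: ifP => // zs; have -> : z = s by apply/le_anti; rewrite zs sz.
  by [].
Qed.

Lemma quad_aut c x y d u v : c < x -> x < y -> y < d -> c < u -> u < v -> v < d ->
  exists ka, [/\ is_aut ka, ka c = c, ka x = u, ka y = v & ka d = d].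
Proof.
move=> cx xy yd cu uv vd.
have [al [hal a1 a2]] := uh2 uh cx cu.
have [be [hbe b1 b2]] := uh2 uh xy uv.
have [ga [hga g1 g2]] := uh2 uh yd vd.
pose f1 z := if z <= c then z else al z.
have h1 : is_aut f1 by apply: aut_piece aut_id hal _; rewrite a1.
have f1x : f1 x = u by rewrite /f1 leNgt cx /= a2.
pose f2 z := if z <= x then f1 z else be z.
have h2 : is_aut f2 by apply: aut_piece h1 hbe _; rewrite f1x b1.
have f2y : f2 y = v by rewrite /f2 leNgt xy /= b2.
pose f3 z := if z <= y then f2 z else ga z.
have h3 : is_aut f3 by apply: aut_piece h2 hga _; rewrite f2y g1.
have f3d : f3 d = d by rewrite /f3 leNgt yd /= g2.
pose f4 z := if z <= d then f3 z else z.
have h4 : is_aut f4 by apply: aut_piece h3 aut_id f3d.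
have cd : c < d by apply: lt_trans cx (lt_trans xy yd).
have xd : x < d by apply: lt_trans xy yd.
have cy : c < y by apply: lt_trans cx xy.
exists f4; split => //.
- by rewrite /f4 /f3 /f2 /f1 (ltW cd) (ltW cy) (ltW cx) lexx.
- by rewrite /f4 /f3 /f2 (ltW xd) (ltW xy) lexx.
- by rewrite /f4 /f3 (ltW yd) lexx.
- by rewrite /f4 lexx.
Qed.

End UHc.

Section ND.
Context {disp : Order.disp_t} {X : orderType disp}.
Local Notation oT := (order_topology X).

Definition ndI (A : set X) := forall p q : X, p < q -> exists p' q' : X,
  [/\ p <= p', p' < q', q' <= q & forall z, p' < z -> z < q' -> ~ A z].

Lemma openI_oT (p q : X) : open ([set z : X | p < z < q] : set oT).
Proof.
have -> : ([set z : X | p < z < q] : set oT) = (`]p, q[%classic : set oT).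
  by apply/seteqP; split=> z /=; rewrite in_itv.
exact: (@itv_open _ oT p q).
Qed.

Lemma nd_ndI (A : set X) : nowhere_dense (A : set oT) -> ndI A.
Proof.
rewrite /nowhere_dense => h p q pq.
have [[z0 hz0]|nz] := pselect (exists z, p < z < q); last first.
  exists p, q; split => // z pz zq; case: nz; exists z; by rewrite pz zq.
have [[w [hw nw]]|allc] := pselect (exists w, p < w < q /\ ~ closure (A : set oT) w); last first.
  have : (closure (A : set oT))° z0.
    apply: (@filterS _ _ _ [set z : X | p < z < q]).
      move=> w hw; apply: contrapT => nw; apply: allc; by exists w.
    exact: open_nbhs_nbhs (conj (openI_oT p q) hz0).
  by rewrite h.
have [B [nB AB]] : exists B, nbhs (w : oT) B /\ ~ (A `&` B !=set0).
  apply: contrapT => hh; apply: nw => B nB; apply: contrapT => hb; apply: hh; by exists B.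
have nB' : nbhs (w : oT) (B `&` [set z : X | p < z < q]).
  by apply: filterI => //; exact: open_nbhs_nbhs (conj (openI_oT p q) hw).
rewrite order_nbhs_itv in nB'.
case: nB' => i [oi wi] isub.
have key : forall z : X, z \in i -> ~ A z.
  move=> z zi Az; apply: AB; exists z; split => //; by case: (isub z zi).
clear isub; move: oi wi key; case: i => [[[]l|[]] [[]r|[]]] //= _; rewrite ?in_itv /= => wi key.
- exists (Order.max l p), (Order.min r q); split.
  + by rewrite le_max lexx orbT.
  + case/andP: wi => lw wr; case/andP: hw => pw wq.
    by apply: (@lt_trans _ _ w); rewrite ?gt_max ?lt_min ?lw ?pw ?wr ?wq.
  + by rewrite ge_min lexx orbT.
  + move=> z; rewrite gt_max lt_min => /andP[lz _] /andP[zr _]; apply: key.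
    by rewrite in_itv /= lz zr.
- exists (Order.max l p), q; split => //.
  + by rewrite le_max lexx orbT.
  + case/andP: hw => pw wq.
    apply: (lt_le_trans _ (ltW wq)); rewrite gt_max pw andbT.
    by move: wi; rewrite ?andbT.
  + move=> z; rewrite gt_max => /andP[lz _] _; apply: key.
    by rewrite in_itv /= lz.
- exists p, (Order.min r q); split => //.
  + case/andP: hw => pw wq.
    apply: (lt_le_trans pw); rewrite le_min (ltW wq) andbT.
    by move: wi; rewrite ?andbT => /ltW.
  + by rewrite ge_min lexx orbT.
  + move=> z _; rewrite lt_min => /andP[zr _]; apply: key.
    by rewrite in_itv /= zr.
- by exists p, q; split => // z _ _; apply: key.
Qed.
Lemma ndI_nd (A : set X) :
  (forall x : X, exists y, y < x) -> (forall x : X, exists y, x < y) ->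
  (forall x y : X, x < y -> exists z, x < z < y) ->
  ndI A -> nowhere_dense (A : set oT).
Proof.
move=> nmin nmax dns hA; rewrite /nowhere_dense; apply/seteqP; split => // w hw.
rewrite /interior /= order_nbhs_itv in hw.
case: hw => i [oi wi] isub.
have [p [q [pw wq hpq]]] : exists p q : X, [/\ p < w, w < q &
    forall z : X, p < z -> z < q -> closure (A : set oT) z].
  suff [p [q [pw wq hpq]]] : exists p q : X, [/\ p < w, w < q &
    forall z : X, p < z -> z < q -> z \in i].
    by exists p, q; split => // z pz zq; apply: isub; exact: hpq.
  clear isub; move: oi wi; case: i => [[[]l|[]] [[]r|[]]] //= _; rewrite ?in_itv /= => wi.
  - case/andP: wi => lw wr; exists l, r; split => // z lz zr; by rewrite in_itv /= lz zr.
  - case: (nmax w) => r wr; exists l, r; split => //; first by move: wi; rewrite ?andbT.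
    move=> z lz zr; by rewrite in_itv /= lz.
  - case: (nmin w) => l lw; exists l, r; split => // z _ zr; by rewrite in_itv /= zr.
  - case: (nmin w) => l lw; case: (nmax w) => r wr; exists l, r; split => //.
have [p' [q' [pp' pq' qq' hfree]]] := hA p q (lt_trans pw wq).
case: (dns _ _ pq') => z /andP[pz zq].
have cz : closure (A : set oT) z.
  by apply: hpq; [exact: le_lt_trans pz | exact: lt_le_trans qq'].
have : nbhs (z : oT) [set y : X | p' < y < q'].
  by apply: open_nbhs_nbhs; split; [exact: openI_oT | rewrite /= pz zq].
move/cz => [y [Ay /= /andP[py yq]]].
by case: (hfree y py yq).
Qed.

End ND.

Section Ideal.
Context {disp : Order.disp_t} {X : orderType disp}.
Context (uh : @ultrahomogeneous disp X) (two : exists x y : X, x <> y).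

Lemma ndI0 : ndI (@set0 X).
Proof. by move=> p q pq; exists p, q; split => // z _ _ []. Qed.

Lemma ndI_sub (a b : set X) : ndI b -> a `<=` b -> ndI a.
Proof.
move=> hb ab p q pq; have [p' [q' [h1 h2 h3 h4]]] := hb p q pq.
by exists p', q'; split => // z z1 z2 /ab; apply: h4.
Qed.

Lemma ndIU (a b : set X) : ndI a -> ndI b -> ndI (a `|` b).
Proof.
move=> ha hb p q pq; have [p' [q' [h1 h2 h3 h4]]] := ha p q pq.
have [p'' [q'' [k1 k2 k3 k4]]] := hb p' q' h2.
exists p'', q''; split => //; [exact: le_trans k1|exact: le_trans h3|].
move=> z z1 z2 [].
- by apply: h4; [exact: le_lt_trans z1|exact: lt_le_trans k3].
- exact: k4.
Qed.

Lemma ndI_img (g : X -> X) (a : set X) : is_aut g -> ndI a -> ndI (g @` a).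
Proof.
move=> hg ha p q pq; have [gi [hgi c1 c2]] := aut_invE hg.
have gpq : gi p < gi q by rewrite (aut_lt hgi).
have [p' [q' [h1 h2 h3 h4]]] := ha (gi p) (gi q) gpq.
exists (g p'), (g q'); split.
- by rewrite -(aut_le hgi) c1.
- by rewrite (aut_lt hg).
- by rewrite -(aut_le hgi) c1.
- move=> z z1 z2 [w aw ew]; subst z; apply: (h4 w) => //.
  + by rewrite -(aut_lt hg).
  + by rewrite -(aut_lt hg).
Qed.

Lemma ndI1 (x : X) : ndI [set x].
Proof.
move=> p q pq; have [xq|qx] := ltP x q.
  exists (Order.max p x), q; split => //.
  - by rewrite le_max lexx.
  - by rewrite gt_max pq xq.
  - by move=> z; rewrite gt_max => /andP[_ xz] _ ezx; move: xz; rewrite ezx ltxx.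
exists p, q; split => // z _ zq ezx; move: (lt_le_trans zq qx); by rewrite ezx ltxx.
Qed.

Lemma dyn_ideal : dynamical_ideal (@Aut disp X) (@nowhere_dense_ideal disp X).
Proof.
have nd := fun A => @ndI_nd _ X A (nomin uh two) (nomax uh two) (dense_uh uh two).
split; [split|..].
- by apply: nd; exact: ndI0.
- by move=> a b /nd_ndI hb ab; apply: nd; exact: ndI_sub hb ab.
- by move=> a b /nd_ndI ha /nd_ndI hb; apply: nd; exact: ndIU.
- by move=> g a hg /nd_ndI ha; apply: nd; exact: ndI_img.
- by move=> x; apply: nd; exact: ndI1.
Qed.

End Ideal.

Section Good.
Context {disp : Order.disp_t} {X : orderType disp}.
Context (uh : @ultrahomogeneous disp X) (two : exists x y : X, x <> y).
Context (a b : set X) (hb : ndI b) (N : set (X -> X)).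
Context (hN : normal_subgroup N (pstab Aut a)) (hNb : pstab Aut b `<=` N).

Lemma good (I : Type) (P : set I) (c x y d : I -> X) (h : X -> X) :
  (forall i, P i -> [/\ c i < x i, x i < y i & y i < d i]) ->
  (forall i j z, P i -> P j -> c i <= z <= d i -> c j <= z <= d j -> i = j) ->
  (forall i, P i -> forall z, c i <= z <= d i -> ~ a z) ->
  is_aut h ->
  (forall z, (forall i, P i -> ~ (x i < z < y i)) -> h z = z) ->
  N h.
Proof.
move=> hcxyd hdisj hfree hh hout.
case: hN => NH Nid Ncomp Ninv Nconj.
have hK : forall i, exists ka : X -> X, P i ->
    [/\ is_aut ka, ka (c i) = c i, ka (d i) = d i &
        forall z, x i < z < y i -> ~ b (ka z)].
  move=> i; have [Pi|nPi] := pselect (P i); last by exists id.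
  have [cx xy yd] := hcxyd i Pi.
  have cd : c i < d i by apply: lt_trans cx (lt_trans xy yd).
  have [p' [q' [h1 h2 h3 h4]]] := hb cd.
  have [u /andP[pu uq]] := dense_uh uh two h2.
  have [v /andP[uv vq]] := dense_uh uh two uq.
  have [ka [hka k1 k2 k3 k4]] := quad_aut uh cx xy yd
    (le_lt_trans h1 pu) uv (lt_le_trans vq h3).
  exists ka => _; split => // z /andP[xz zy].
  apply: h4.
  - by apply: lt_trans pu _; rewrite -k2 (aut_lt hka).
  - by apply: lt_trans _ vq; rewrite -k3 (aut_lt hka).
have [K hKi] := choice hK.
have hphi : forall i, P i -> [/\ is_aut (K i), K i (c i) = c i & K i (d i) = d i].
  by move=> i Pi; have [? ? ? _] := hKi i Pi.
pose k := glue P c d K.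
have hk : is_aut k by exact: glue_aut hdisj hphi.
have [ki [hki c1 c2]] := aut_invE hk.
pose n := k \o h \o ki.
have Nn : N n.
  apply: hNb; split; first by apply: aut_comp (aut_comp hk hh) hki.
  move=> w bw; rewrite /n /=.
  suff -> : h (ki w) = ki w by rewrite c2.
  apply: hout => i Pi /andP[xz zy].
  have [cx xy yd] := hcxyd i Pi.
  have zi : c i <= ki w <= d i.
    by rewrite (ltW (lt_trans cx xz)) (ltW (lt_trans zy yd)).
  have := glue_in K hdisj Pi zi; rewrite -/k c2 => ew.
  by have [_ _ _ hb'] := hKi i Pi; apply: (hb' (ki w)); [rewrite xz zy|rewrite -ew].
have Gk : pstab Aut a k.
  split => // w aw; apply: (glue_out (P:=P) K) => i Pi wi.
  exact: (hfree i Pi w wi aw).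
have := Nconj _ _ _ Gk c1 c2 Nn.
have -> // : ki \o n \o k = h.
by apply: funext => z; rewrite /n /= c1 c1.
Qed.

End Good.

Section Pow.
Context {disp : Order.disp_t} {X : orderType disp}.
Context (f fi : X -> X) (hf : is_aut f) (c1 : cancel f fi) (c2 : cancel fi f).

Definition gpow (n : Z) (z : X) : X :=
  if Z.leb 0%Z n then ssrnat.iter (Z.to_nat n) f z else ssrnat.iter (Z.to_nat (- n)%Z) fi z.

Lemma gpow0 z : gpow 0%Z z = z.
Proof. by []. Qed.

Lemma gpowS n z : gpow (n + 1)%Z z = f (gpow n z).
Proof.
rewrite /gpow; case: (Z.leb_spec0 0%Z n) => hn.
  have -> : Z.leb 0%Z (n + 1)%Z = true by apply/Z.leb_le; lia.
  have -> : Z.to_nat (n + 1)%Z = (Z.to_nat n).+1 by lia.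
  by rewrite iterS.
case: (Z.leb_spec0 0%Z (n + 1)%Z) => hn1.
  have -> : Z.to_nat (n + 1)%Z = 0%nat by lia.
  have -> : Z.to_nat (- n)%Z = 1%nat by lia.
  by rewrite /= c2.
have -> : Z.to_nat (- n)%Z = (Z.to_nat (- (n + 1))%Z).+1 by lia.
by rewrite iterS c2.
Qed.

Lemma gpowP n z : gpow (n - 1)%Z z = fi (gpow n z).
Proof. by have := gpowS (n - 1) z; rewrite Z.sub_add => ->; rewrite c1. Qed.

Lemma gpow1 z : gpow 1%Z z = f z.
Proof. by rewrite -(gpowS 0%Z z). Qed.

Lemma gpow_lt n : forall x y, x < y -> gpow n x < gpow n y.
Proof.
have hfi : is_aut fi by exact: aut_inv c1 c2.
induction n using Z.peano_ind => x y xy //.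
- by rewrite -[Z.succ n]/(n + 1)%Z !gpowS (aut_lt hf); exact: IHn.
- by rewrite -[Z.pred n]/(n - 1)%Z !gpowP (aut_lt hfi); exact: IHn.
Qed.

Lemma gpow_le n x y : x <= y -> gpow n x <= gpow n y.
Proof.
rewrite le_eqVlt => /orP[/eqP->//|xy]; exact/ltW/gpow_lt.
Qed.

Lemma gpow_add m n z : gpow (m + n)%Z z = gpow m (gpow n z).
Proof.
induction m using Z.peano_ind.
- by rewrite Z.add_0_l.
- rewrite -[Z.succ m]/(m + 1)%Z.
  have -> : (m + 1 + n = (m + n) + 1)%Z by lia.
  by rewrite !gpowS IHm.
- rewrite -[Z.pred m]/(m - 1)%Z.
  have -> : (m - 1 + n = (m + n) - 1)%Z by lia.
  by rewrite !gpowP IHm.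
Qed.

Lemma gpowK n z : gpow (- n)%Z (gpow n z) = z.
Proof. by rewrite -gpow_add Z.add_opp_diag_l. Qed.

Definition Orb (z : X) : set X := [set w | exists k l : Z, gpow k z <= w <= gpow l z].

Lemma orb_refl z : Orb z z.
Proof. by exists 0%Z, 0%Z; rewrite /= lexx. Qed.

Lemma orb_sym z w : Orb z w -> Orb w z.
Proof.
case=> k [l /andP[kw wl]]; exists (- l)%Z, (- k)%Z; apply/andP; split.
- by rewrite -{1}(gpowK l z); exact: gpow_le.
- by rewrite -{1}(gpowK k z); exact: gpow_le.
Qed.

Lemma orb_sub z w : Orb z w -> Orb w `<=` Orb z.
Proof.
case=> k [l /andP[kw wl]] v [i [j /andP[iv vj]]].
exists (i + k)%Z, (j + l)%Z; apply/andP; split.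
- by rewrite gpow_add; apply: le_trans iv; exact: gpow_le.
- by rewrite gpow_add; apply: le_trans vj _; exact: gpow_le.
Qed.

Lemma orb_eq z w : Orb z w -> Orb w = Orb z.
Proof.
move=> zw; apply/seteqP; split; first exact: orb_sub.
exact: orb_sub (orb_sym zw).
Qed.

Lemma gpow_fix z : f z = z -> forall k, gpow k z = z.
Proof.
move=> fz; have fiz : fi z = z by rewrite -{1}fz c1.
induction k using Z.peano_ind => //.
- by rewrite -[Z.succ k]/(k + 1)%Z gpowS IHk.
- by rewrite -[Z.pred k]/(k - 1)%Z gpowP IHk.
Qed.

Lemma orb_fix z : f z = z -> forall w, Orb z w -> w = z.
Proof.
move=> fz w [k [l]]; rewrite !gpow_fix // => h.
by apply/le_anti; rewrite andbC.
Qed.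

Lemma orb_mov z w : f z <> z -> Orb z w -> f w <> w.
Proof. by move=> fz zw fw; apply: fz; rewrite (orb_fix fw (orb_sym zw)). Qed.

Definition sq (r : X) (k : Z) : X := if r < f r then gpow k r else gpow (- k)%Z r.

Lemma sq_lt r : f r <> r -> forall k, sq r k < sq r (k + 1)%Z.
Proof.
move=> fr k; rewrite /sq; case: ifP => rfr.
  by rewrite gpow_add gpow1; apply: gpow_lt.
have frr : f r < r.
  by case: (ltgtP r (f r)) rfr => // e; case: fr.
have -> : (- k = - (k + 1) + 1)%Z by lia.
by rewrite gpow_add gpow1; apply: gpow_lt.
Qed.

Lemma sq_mono r : f r <> r -> forall k l, (k < l)%Z -> sq r k < sq r l.
Proof.
move=> fr k l kl.
have -> : l = (k + Z.of_nat (Z.to_nat (l - k - 1)) + 1)%Z by lia.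
elim: (Z.to_nat (l - k - 1)) => [|d IH].
  by rewrite Z.add_0_r; exact: sq_lt.
apply: lt_trans IH _.
have -> : (k + Z.of_nat d.+1 + 1 = (k + Z.of_nat d + 1) + 1)%Z by lia.
exact: sq_lt.
Qed.

Lemma sq_le r : f r <> r -> forall k l, (k <= l)%Z -> sq r k <= sq r l.
Proof.
move=> fr k l kl; case: (Z.eq_dec k l) => [->//|ne].
by apply/ltW/sq_mono => //; lia.
Qed.

Lemma sq_step r : f r <> r -> exists e : Z, (e = 1 \/ e = -1)%Z /\
  forall k, f (sq r k) = sq r (k + e)%Z.
Proof.
move=> fr; rewrite /sq; case rfr: (r < f r).
  by exists 1%Z; split; [left|move=> k; rewrite gpowS].
exists (-1)%Z; split; [right|move=> k] => //.
have -> : (- (k + -1) = - k + 1)%Z by lia.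
by rewrite gpowS.
Qed.

Lemma sq_orb r k : Orb r (sq r k).
Proof.
rewrite /sq; case: (r < f r); [exists k, k | exists (- k)%Z, (- k)%Z]; by rewrite lexx.
Qed.

Lemma orb_sq r w : Orb r w -> exists k l, sq r k <= w <= sq r l.
Proof.
case=> k [l h]; rewrite /sq; case: (r < f r); first by exists k, l.
by exists (- k)%Z, (- l)%Z; rewrite !Z.opp_involutive.
Qed.

Lemma locate r w : f r <> r -> Orb r w -> exists j, sq r j <= w <= sq r (j + 1)%Z.
Proof.
move=> fr /orb_sq [k [l /andP[kw wl]]].
have kl : (k <= l)%Z.
  case: (Z.le_gt_cases k l) => // lk.
  by have := sq_mono fr lk; rewrite ltNge (le_trans kw wl).
have el : l = (k + Z.of_nat (Z.to_nat (l - k)))%Z by lia.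
rewrite el in wl; move: (Z.to_nat (l - k)) wl => d wl; clear el kl.
elim: d k kw wl => [|d IH] k kw wl.
  exists k; rewrite kw /=; rewrite Z.add_0_r in wl.
  by apply: le_trans wl (ltW (sq_lt fr k)).
case: (leP w (sq r (k + 1))) => wk1; first by exists k; rewrite kw wk1.
apply: (IH (k + 1)%Z (ltW wk1)).
by have <- : (k + Z.of_nat d.+1 = k + 1 + Z.of_nat d)%Z by lia.
Qed.

Lemma locate12 r w : f r <> r -> Orb r w -> exists n t : Z,
  (0 <= t < 12)%Z /\ sq r (12 * n + t)%Z <= w <= sq r (12 * n + t + 1)%Z.
Proof.
move=> fr rw; have [j hj] := locate fr rw.
exists (j / 12)%Z, (j mod 12)%Z; split; first by have := Z.mod_pos_bound j 12; lia.
by rewrite -Z_div_mod_eq_full.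
Qed.

End Pow.

Lemma sq_between {disp : Order.disp_t} {X : orderType disp} (f fi : X -> X) r k l w :
  sq f fi r k <= w <= sq f fi r l -> Orb f fi r w.
Proof.
rewrite /sq; case: (r < f r) => h; [by exists k, l | by exists (- k)%Z, (- l)%Z].
Qed.

Section Main.
Context {disp : Order.disp_t} {X : orderType disp}.
Context (uh : @ultrahomogeneous disp X) (two : exists x y : X, x <> y).
Context (a b : set X) (hb : ndI b) (N : set (X -> X)).
Context (hN : normal_subgroup N (pstab Aut a)) (hNb : pstab Aut b `<=` N).

Lemma main_g g : pstab Aut a g -> N g.
Proof.
move=> [hg gfix].
have [gi [hgi c1 c2]] := aut_invE hg.
pose O := Orb g gi. pose s := sq g gi.
have hc : forall A : set X, exists x : X, A !=set0 -> A x.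
  move=> A; have [[x Ax]|nA] := pselect (A !=set0).
    by exists x.
  case: two => x _; exists x => h; by case: nA.
have [R hR] := choice hc.
pose isrep r := g r <> r /\ R (O r) = r.
have rep_cover : forall w, g w <> w -> exists r, isrep r /\ O r w.
  move=> w gw; have Ow : O w !=set0 by exists w; exact: orb_refl.
  have wr := hR _ Ow.
  have e := orb_eq hg c1 c2 wr.
  exists (R (O w)); split; [split|].
  - exact: (@orb_mov _ _ g gi hg c1 c2 w _ gw wr).
  - by rewrite /O e.
  - by rewrite /O e; exact: orb_refl.
have rep_uniq : forall r r' v, isrep r -> isrep r' -> O r v -> O r' v -> r = r'.
  move=> r r' v [_ e1] [_ e2] h1 h2.
  by rewrite -e1 -e2 /O -(orb_eq hg c1 c2 h1) -(orb_eq hg c1 c2 h2).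
have afree : forall r w, isrep r -> O r w -> ~ a w.
  move=> r w [gr _] rw aw; exact: (@orb_mov _ _ g gi hg c1 c2 r w gr rw (gfix w aw)).
have smono : forall r k l, isrep r -> (k < l)%Z -> s r k < s r l.
  by move=> r k l [gr _] kl; exact: (@sq_mono _ _ g gi hg c1 c2 r gr k l kl).
have sle : forall r k l, isrep r -> (k <= l)%Z -> s r k <= s r l.
  by move=> r k l [gr _] kl; exact: (@sq_le _ _ g gi hg c1 c2 r gr k l kl).
have bdisj : forall (al be : Z), (be - al < 12)%Z -> forall r n r' n' z,
    isrep r -> isrep r' ->
    s r (12 * n + al)%Z <= z <= s r (12 * n + be)%Z ->
    s r' (12 * n' + al)%Z <= z <= s r' (12 * n' + be)%Z -> (r, n) = (r', n').
  move=> al be hab r n r' n' z hr hr' hz hz'.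
  have err := rep_uniq _ _ _ hr hr' (sq_between hz) (sq_between hz'); subst r'.
  case: (Z.lt_total n n') => [nn|[->//|nn]].
  - have := smono r (12 * n + be)%Z (12 * n' + al)%Z hr ltac:(lia).
    case/andP: hz => _ z1; case/andP: hz' => z2 _.
    by move=> hh; have := lt_le_trans (le_lt_trans z1 hh) z2; rewrite ltxx.
  - have := smono r (12 * n' + be)%Z (12 * n + al)%Z hr ltac:(lia).
    case/andP: hz' => _ z1; case/andP: hz => z2 _.
    by move=> hh; have := lt_le_trans (le_lt_trans z1 hh) z2; rewrite ltxx.
pose P := fun i : X * Z => isrep i.1.
have hPhi : forall i : X * Z, exists phi : X -> X, P i ->
    [/\ is_aut phi, phi (s i.1 (12 * i.2 + -2)%Z) = s i.1 (12 * i.2 + -2)%Z,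
        phi (s i.1 (12 * i.2 + 5)%Z) = s i.1 (12 * i.2 + 5)%Z &
        forall z, s i.1 (12 * i.2)%Z <= z <= s i.1 (12 * i.2 + 3)%Z -> phi z = g z].
  move=> [r n]; have [hr|nr] := pselect (isrep r); last by exists id.
  have [e [he ge]] := @sq_step _ _ g gi c2 r hr.1.
  have q1 : s r (12 * n + -2)%Z < g (s r (12 * n)%Z).
    by rewrite ge; apply: smono => //; case: he => ->; lia.
  have q2 : g (s r (12 * n + 3)%Z) < s r (12 * n + 5)%Z.
    by rewrite ge; apply: smono => //; case: he => ->; lia.
  have [phi [hphi p1 p2 p3]] := ext_aut uh hg
    (smono r (12 * n + -2)%Z (12 * n)%Z hr ltac:(lia))
    (sle r (12 * n)%Z (12 * n + 3)%Z hr ltac:(lia))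
    (smono r (12 * n + 3)%Z (12 * n + 5)%Z hr ltac:(lia)) q1 q2.
  by exists phi.
have [Phi hPhi'] := choice hPhi.
pose lo1 i := s i.1 (12 * i.2 + -2)%Z.
pose hi1 i := s i.1 (12 * i.2 + 5)%Z.
have disj1 : forall i j z, P i -> P j -> lo1 i <= z <= hi1 i -> lo1 j <= z <= hi1 j -> i = j.
  move=> [r n] [r' n'] z Pi Pj hz1 hz2.
  exact: (bdisj (-2)%Z 5%Z ltac:(lia) r n r' n' z Pi Pj hz1 hz2).
have hphi1 : forall i, P i -> [/\ is_aut (Phi i), Phi i (lo1 i) = lo1 i & Phi i (hi1 i) = hi1 i].
  by move=> i Pi; have [? ? ? _] := hPhi' i Pi.
pose h1 := glue P lo1 hi1 Phi.
have hh1 : is_aut h1 by exact: glue_aut disj1 hphi1.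
have h1F : forall r n z, isrep r -> s r (12 * n)%Z <= z <= s r (12 * n + 3)%Z -> h1 z = g z.
  move=> r n z hr /andP[z1 z2].
  have zi : lo1 (r, n) <= z <= hi1 (r, n).
    rewrite /lo1 /hi1; apply/andP; split.
    - by apply: (le_trans _ z1); apply: sle => //=; lia.
    - by apply: (le_trans z2); apply: sle => //=; lia.
  rewrite /h1 (glue_in Phi disj1 (i := (r, n)) hr zi).
  by have [_ _ _ ->] := hPhi' (r, n) hr; rewrite // z1 z2.
have h1fix : forall z, g z = z -> h1 z = z.
  move=> z gz; apply: (glue_out (P := P) Phi) => -[r n] Pi zi.
  have Oz : O r z by exact: sq_between zi.
  exact: (@orb_mov _ _ g gi hg c1 c2 r z Pi.1 Oz gz).
have Nh1 : N h1.
  apply: (good uh two hb hN hNb (P := P)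
    (c := fun i => s i.1 (12 * i.2 + -3)%Z) (x := lo1) (y := hi1)
    (d := fun i => s i.1 (12 * i.2 + 6)%Z)).
  - move=> [r n] Pi; rewrite /lo1 /hi1; split; apply: smono => //=; lia.
  - move=> [r n] [r' n'] z Pi Pj hz1 hz2.
    exact: (bdisj (-3)%Z 6%Z ltac:(lia) r n r' n' z Pi Pj hz1 hz2).
  - move=> [r n] Pi z zi; apply: (afree r z Pi); exact: sq_between zi.
  - exact: hh1.
  - move=> z hz.
    have [[i [Pi zi]]|nz] := pselect (exists i, P i /\ lo1 i <= z <= hi1 i).
      rewrite /h1 (glue_in Phi disj1 Pi zi).
      have [_ e1 e2] := hphi1 i Pi.
      case/andP: zi => z1 z2.
      case: (ltgtP (lo1 i) z) => [lz|zl|<-//]; last by move: (lt_le_trans zl z1); rewrite ltxx.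
      case: (ltgtP z (hi1 i)) => [zh|hz'|->//]; last by move: (lt_le_trans hz' z2); rewrite ltxx.
      by case: (hz i Pi); rewrite lz zh.
    by apply: (glue_out (P := P) Phi) => i Pi zi; apply: nz; exists i.
have [hi1' [hhi1 d1 d2]] := aut_invE hh1.
pose h2 := hi1' \o g.
have Nh2 : N h2.
  apply: (good uh two hb hN hNb (P := P)
    (c := fun i => s i.1 (12 * i.2 + 2)%Z) (x := fun i => s i.1 (12 * i.2 + 3)%Z)
    (y := fun i => s i.1 (12 * i.2 + 12)%Z) (d := fun i => s i.1 (12 * i.2 + 13)%Z)).
  - move=> [r n] Pi; split; apply: smono => //=; lia.
  - move=> [r n] [r' n'] z Pi Pj hz1 hz2.
    exact: (bdisj 2%Z 13%Z ltac:(lia) r n r' n' z Pi Pj hz1 hz2).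
  - move=> [r n] Pi z zi; apply: (afree r z Pi); exact: sq_between zi.
  - exact: aut_comp hhi1 hg.
  - move=> z hz; rewrite /h2 /=.
    suff <- : h1 z = g z by rewrite d1.
    have [gz|gz] := pselect (g z = z); first by rewrite gz; exact: h1fix.
    have [r [hr rz]] := rep_cover z gz.
    have [n [t [ht /andP[z1 z2]]]] := @locate12 _ _ g gi hg c1 c2 r z hr.1 rz.
    case: (Z.le_gt_cases t 2) => ht2.
      apply: (h1F r n) => //; apply/andP; split.
      - by apply: (le_trans _ z1); apply: sle => //; lia.
      - by apply: (le_trans z2); apply: sle => //; lia.
    have za : s r (12 * n + 3)%Z <= z by apply: (le_trans _ z1); apply: sle => //; lia.
    have zb : z <= s r (12 * n + 12)%Z by apply: (le_trans z2); apply: sle => //; lia.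
    case: (ltgtP (s r (12 * n + 3)%Z) z) => [lz|zl|<-]; last 2 first.
    + by move: (lt_le_trans zl za); rewrite ltxx.
    + apply: (h1F r n) => //; rewrite lexx andbT; apply: sle => //; lia.
    case: (ltgtP z (s r (12 * n + 12)%Z)) => [zh|hz'|->]; last 2 first.
    + by move: (lt_le_trans hz' zb); rewrite ltxx.
    + apply: (h1F r (n + 1)%Z) => //.
      have -> : (12 * (n + 1) = 12 * n + 12)%Z by lia.
      by rewrite lexx /=; apply: sle => //; lia.
    by case: (hz (r, n) hr) => /=; rewrite lz zh.
have -> : g = h1 \o h2.
  by apply: funext => z; rewrite /h2 /= d2.
by case: hN => _ _ Ncomp _ _; exact: Ncomp.
Qed.

End Main.

Theorem mainTheorem15 (disp : Order.disp_t) (X : orderType disp) :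
  (exists x y : X, x <> y) ->
  @ultrahomogeneous disp X ->
  simple_dynamical_ideal (@Aut disp X) (@nowhere_dense_ideal disp X).
Proof.
move=> two uh; split; first exact: dyn_ideal uh two.
move=> a b Ia Ib ab N hN hNb.
have hb : ndI b by exact: nd_ndI Ib.
apply/seteqP; split; first by case: hN.
move=> g Gg; exact: (main_g uh two hb hN hNb Gg).
Qed.
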